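(* Let $L$ be a Hausdorff co-Heyting algebra and let $(L',d')$ be the completion of the metric space $(L,\operatorname{dist}_L)$, with the operations $0,1,\vee,\wedge,-$ extended to $L'$ by continuity. Then $L'$ is a Hausdorff co-Heyting algebra and $d'$ is exactly the codimetric metric $\operatorname{dist}_{L'}$. Moreover, for every positive integer $d$, the inclusion $L\subseteq L'$ induces an isomorphism $L/dL\cong L'/dL'$; that is, the canonical projection $L\to L/dL$ is the restriction to $L$ of the canonical projection $L'\to L'/dL'$ under this identification.
   Context: A co-Heyting algebra is a bounded distributive lattice $(L,0,1,\vee,\wedge)$ such that $a-b=\min\{c\in L: a\le b\vee c\}$ exists for all $a,b$. Let $a\triangle b=(a-b)\vee(b-a)$; for an ideal $I$, $L/I$ is the quotient by $a\equiv_I b\iff a\triangle b\in I$. $\operatorname{Spec}L$ is the set of prime filters ordered by inclusion; height = foundation rank there; $\operatorname{codim}_La=\min\{\operatorname{height}\mathfrak p: a\in\mathfrak p\}$ ($+\infty$ if none); $dL=\{a:\operatorname{codim}_La\ge d\}$ is an ideal. The codimetric pseudometric is $\operatorname{dist}_L(a,b)=2^{-\operatorname{codim}_L(a\triangle b)}$ if finite and $0$ otherwise; the operations $\vee,\wedge,-$ are $1$-Lipschitz for it, hence extend uniquely continuously to the completion. $L$ is Hausdorff if every nonzero element has finite codimension (equivalently $\operatorname{dist}_L$ is a metric). *)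

(* Defs.v *)
From Stdlib Require Import Reals Lra Lia ClassicalEpsilon.
Open Scope R_scope.

Set Implicit Arguments.

Record coHOps (T : Type) := CoHOps {
  czero : T; cone : T;
  cjoin : T -> T -> T; cmeet : T -> T -> T;
  csub : T -> T -> T
}.

Section CoHeyting.
Variables (T : Type) (o : coHOps T).

Local Notation "0'" := (czero o).
Local Notation "1'" := (cone o).
Local Notation "a \v b" := (cjoin o a b) (at level 50, left associativity).
Local Notation "a \^ b" := (cmeet o a b) (at level 40, left associativity).

Definition cle (a b : T) : Prop := a \v b = b.

Definition is_bdl : Prop :=
  (forall a b c, a \v (b \v c) = (a \v b) \v c) /\
  (forall a b c, a \^ (b \^ c) = (a \^ b) \^ c) /\
  (forall a b, a \v b = b \v a) /\
  (forall a b, a \^ b = b \^ a) /\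
  (forall a b, a \v (a \^ b) = a) /\
  (forall a b, a \^ (a \v b) = a) /\
  (forall a b c, a \^ (b \v c) = (a \^ b) \v (a \^ c)) /\
  (forall a, a \v 0' = a) /\
  (forall a, a \^ 1' = a).

Definition is_coHeyting : Prop :=
  is_bdl /\
  forall a b, cle a (b \v csub o a b) /\
              forall c, cle a (b \v c) -> cle (csub o a b) c.

Definition symdiff (a b : T) : T := csub o a b \v csub o b a.

(** Prime filters (elements of Spec L), as predicates on T. *)
Definition prime_filter (F : T -> Prop) : Prop :=
  F 1' /\ ~ F 0' /\
  (forall a b, F a -> cle a b -> F b) /\
  (forall a b, F a -> F b -> F (a \^ b)) /\
  (forall a b, F (a \v b) -> F a \/ F b).

Definition strict_sub (F G : T -> Prop) : Prop :=
  (forall x, F x -> G x) /\ exists x, G x /\ ~ F x.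

(** height p >= n (height = foundation rank in Spec L, ordered by inclusion):
    for finite n, rank(p) >= n+1 iff some prime q strictly below p has rank >= n. *)
Fixpoint heightGe (p : T -> Prop) (n : nat) : Prop :=
  match n with
  | O => True
  | S m => exists q, prime_filter q /\ strict_sub q p /\ heightGe q m
  end.

(** codim a >= n  iff every prime filter containing a has height >= n
    (codim = min of heights, +oo if no prime filter contains a). *)
Definition codimGe (a : T) (n : nat) : Prop :=
  forall p, prime_filter p -> p a -> heightGe p n.

Definition dIdeal (d : nat) (a : T) : Prop := codimGe a d.

Definition codim_is (a : T) (n : nat) : Prop := codimGe a n /\ ~ codimGe a (S n).

Definition hausdorff : Prop := forall a, a <> 0' -> exists n, codim_is a n.

Definition codist (a b : T) : R :=
  match excluded_middle_informative (exists n, codim_is (symdiff a b) n) with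
  | left _ => / 2 ^ (epsilon (inhabits 0%nat) (fun n => codim_is (symdiff a b) n))
  | right _ => 0
  end.

End CoHeyting.

Definition is_metric (T : Type) (d : T -> T -> R) : Prop :=
  (forall x y, 0 <= d x y) /\
  (forall x y, d x y = 0 <-> x = y) /\
  (forall x y, d x y = d y x) /\
  (forall x y z, d x z <= d x y + d y z).

Definition cauchy_seq (T : Type) (d : T -> T -> R) (u : nat -> T) : Prop :=
  forall eps, 0 < eps -> exists N, forall m n, (N <= m)%nat -> (N <= n)%nat ->
    d (u m) (u n) < eps.

Definition seq_converges_to (T : Type) (d : T -> T -> R) (u : nat -> T) (x : T) : Prop :=
  forall eps, 0 < eps -> exists N, forall n, (N <= n)%nat -> d (u n) x < eps.

Definition complete_metric (T : Type) (d : T -> T -> R) : Prop :=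
  forall u, cauchy_seq d u -> exists x, seq_converges_to d u x.

Definition continuous2 (T : Type) (d : T -> T -> R) (f : T -> T -> T) : Prop :=
  forall x y eps, 0 < eps -> exists delta, 0 < delta /\
    forall x' y', d x x' < delta -> d y y' < delta -> d (f x y) (f x' y') < eps.

Definition is_completion (L L' : Type) (dist : L -> L -> R)
    (d' : L' -> L' -> R) (i : L -> L') : Prop :=
  is_metric d' /\ complete_metric d' /\
  (forall a b, d' (i a) (i b) = dist a b) /\
  (forall x eps, 0 < eps -> exists a, d' x (i a) < eps).

Definition extends_by_continuity (L L' : Type) (o : coHOps L) (o' : coHOps L')
    (d' : L' -> L' -> R) (i : L -> L') : Prop :=
  czero o' = i (czero o) /\ cone o' = i (cone o) /\
  (forall a b, cjoin o' (i a) (i b) = i (cjoin o a b)) /\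
  (forall a b, cmeet o' (i a) (i b) = i (cmeet o a b)) /\
  (forall a b, csub o' (i a) (i b) = i (csub o a b)) /\
  continuous2 d' (cjoin o') /\ continuous2 d' (cmeet o') /\ continuous2 d' (csub o').

(* Main.v *)
Require Import Defs.
From Stdlib Require Import Reals Lra Lia ClassicalEpsilon Classical.
From mathcomp Require ssreflect classical_sets boolp.
Open Scope R_scope.

Module ZornW.
Import ssreflect classical_sets boolp.
Local Open Scope classical_set_scope.
Lemma zorn_sets (T : Type) (adm : (T -> Prop) -> Prop) (A0 : T -> Prop) :
  adm A0 -> (exists t, A0 t) ->
  (forall C : (T -> Prop) -> Prop, (forall X, C X -> adm X) ->
     (forall X Y, C X -> C Y -> (forall t, X t -> Y t) \/ (forall t, Y t -> X t)) ->
     (exists X, C X) -> adm (fun t => exists X, C X /\ X t)) ->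
  exists M, adm M /\ forall Y, adm Y -> (forall t, M t -> Y t) -> forall t, Y t -> M t.
Proof.
move=> hA0 [t0 A0t0] hC.
pose P := fun A : set T => A = set0 \/ adm A.
have HZ : exists A, P A /\ forall B, A `<` B -> ~ P B.
  apply: Zorn_bigcup => F FP Ftot.
  have [[X [FX Xne]] | nF] := pselect (exists X, F X /\ X !=set0).
  { right.
    pose C := fun X => F X /\ X !=set0.
    have -> : \bigcup_(X in F) X = (fun t => exists X, C X /\ X t).
      apply/seteqP; split => t.
        by case=> Y FY Yt; exists Y; split => //; split => //; exists t.
      by case=> Y [[FY _] Yt]; exists Y.
    apply: hC.
    { move=> Y [FY [y Yy]]; case: (FP _ FY) => // Y0; by rewrite Y0 in Yy. }
    { move=> Y Z [FY _] [FZ _]; case: (Ftot _ _ FY FZ) => h; [left|right]; exact: h. }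
    by exists X. }
  { left; apply/seteqP; split => t; last by case. case=> Y FY Yt; exfalso; by apply: nF; exists Y; split => //; exists t. }
case: HZ => A [PA Amax].
have adA : adm A.
  case: PA => // A0e; exfalso.
  apply: (Amax A0); last by right.
  rewrite A0e; split => // h; exact: (h t0 A0t0).
exists A; split => // Y aY AY t Yt.
apply: contrapT => nAt.
apply: (Amax Y); last by right.
split; first exact: AY.
move=> YA; exact: nAt (YA t Yt).
Qed.
End ZornW.

Section Gen.
Variables (T : Type) (o : coHOps T).
Hypothesis H : is_coHeyting o.

Local Notation "0'" := (czero o).
Local Notation "1'" := (cone o).
Local Notation "a \v b" := (cjoin o a b) (at level 50, left associativity).
Local Notation "a \^ b" := (cmeet o a b) (at level 40, left associativity).
Local Notation "a -- b" := (csub o a b) (at level 45, left associativity).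
Local Notation le := (cle o).

Lemma jA a b c : a \v (b \v c) = (a \v b) \v c. Proof. apply H. Qed.
Lemma mA a b c : a \^ (b \^ c) = (a \^ b) \^ c. Proof. apply H. Qed.
Lemma jC a b : a \v b = b \v a. Proof. apply H. Qed.
Lemma mC a b : a \^ b = b \^ a. Proof. apply H. Qed.
Lemma abs1 a b : a \v (a \^ b) = a. Proof. apply H. Qed.
Lemma abs2 a b : a \^ (a \v b) = a. Proof. apply H. Qed.
Lemma distr a b c : a \^ (b \v c) = (a \^ b) \v (a \^ c). Proof. apply H. Qed.
Lemma j0 a : a \v 0' = a. Proof. apply H. Qed.
Lemma m1 a : a \^ 1' = a. Proof. apply H. Qed.
Lemma subH a b : le a (b \v (a -- b)) /\ forall c, le a (b \v c) -> le (a -- b) c.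
Proof. apply H. Qed.

Lemma jid a : a \v a = a.
Proof. rewrite <- (abs2 a a) at 2. apply abs1. Qed.
Lemma mid a : a \^ a = a.
Proof. rewrite <- (abs1 a a) at 2. apply abs2. Qed.
Lemma le_refl a : le a a. Proof. apply jid. Qed.
Lemma le_trans a b c : le a b -> le b c -> le a c.
Proof. unfold cle; intros h1 h2. rewrite <- h2, jA, h1. reflexivity. Qed.
Lemma le_antisym a b : le a b -> le b a -> a = b.
Proof. unfold cle; intros h1 h2. rewrite <- h1, jC. symmetry; exact h2. Qed.
Lemma le_meet a b : le a b <-> a \^ b = a.
Proof. unfold cle; split; intros h.
 - rewrite <- h. apply abs2.
 - rewrite <- h, jC, mC. apply abs1. Qed.
Lemma join_l a b : le a (a \v b).
Proof. unfold cle. rewrite jA, jid. reflexivity. Qed.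
Lemma join_r a b : le b (a \v b).
Proof. rewrite jC. apply join_l. Qed.
Lemma join_lub a b c : le a c -> le b c -> le (a \v b) c.
Proof. unfold cle; intros h1 h2. rewrite <- jA, h2, h1. reflexivity. Qed.
Lemma meet_l a b : le (a \^ b) a.
Proof. apply le_meet. rewrite mC, mA, mid. reflexivity. Qed.
Lemma meet_r a b : le (a \^ b) b.
Proof. rewrite mC. apply meet_l. Qed.
Lemma meet_glb a b c : le c a -> le c b -> le c (a \^ b).
Proof. rewrite !le_meet; intros h1 h2. rewrite mA, h1, h2. reflexivity. Qed.
Lemma le0 a : le 0' a.
Proof. unfold cle. rewrite jC. apply j0. Qed.
Lemma le1 a : le a 1'.
Proof. unfold cle. rewrite jC, <- (m1 a), mC. apply abs1. Qed.
Lemma join_mono a b a' b' : le a a' -> le b b' -> le (a \v b) (a' \v b').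
Proof. intros h1 h2. apply join_lub; [eapply le_trans; [exact h1|apply join_l]|eapply le_trans; [exact h2|apply join_r]]. Qed.
Lemma meet_mono a b a' b' : le a a' -> le b b' -> le (a \^ b) (a' \^ b').
Proof. intros h1 h2. apply meet_glb; [eapply le_trans; [apply meet_l|exact h1]|eapply le_trans; [apply meet_r|exact h2]]. Qed.
Lemma le_join_eq a b : le a b -> a \v b = b. Proof. auto. Qed.

Lemma galois a b c : le (a -- b) c <-> le a (b \v c).
Proof. split; intros h.
 - eapply le_trans. apply (proj1 (subH a b)). apply join_mono; auto using le_refl.
 - apply (proj2 (subH a b)); auto. Qed.
Lemma le_join_sub a b : le a (b \v (a -- b)). Proof. apply subH. Qed.
Lemma sub_mono_l a a' b : le a a' -> le (a -- b) (a' -- b).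
Proof. intros h; apply galois. eapply le_trans; [exact h|apply (le_join_sub a' b)]. Qed.
Lemma sub_anti_r a b b' : le b b' -> le (a -- b') (a -- b).
Proof. intros h; apply galois. eapply le_trans; [apply (le_join_sub a b)|].
 apply join_mono; [exact h|apply le_refl]. Qed.
Lemma sub_le a b : le (a -- b) a.
Proof. apply galois, join_r. Qed.
Lemma sub_join_l x y z : le ((x \v y) -- z) ((x -- z) \v (y -- z)).
Proof. apply galois. apply join_lub.
 - eapply le_trans; [apply (le_join_sub x z)|]. apply join_mono; [apply le_refl|apply join_l].
 - eapply le_trans; [apply (le_join_sub y z)|]. apply join_mono; [apply le_refl|apply join_r]. Qed.
Lemma sub_join_l_eq x y z : (x \v y) -- z = (x -- z) \v (y -- z).
Proof. apply le_antisym; [apply sub_join_l|].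
 apply join_lub; apply sub_mono_l; auto using join_l, join_r. Qed.
Lemma sub_self x : x -- x = 0'.
Proof. apply le_antisym; [|apply le0]. apply galois. rewrite j0. apply le_refl. Qed.
Lemma sub_zero x : x -- 0' = x.
Proof. apply le_antisym; [apply sub_le|]. apply le_trans with (0' \v (x -- 0')).
 apply le_join_sub. rewrite jC, j0. apply le_refl. Qed.
Lemma zero_sub x : 0' -- x = 0'.
Proof. apply le_antisym; [apply sub_le|apply le0]. Qed.
Lemma sub_trans a b c : le (a -- c) ((a -- b) \v (b -- c)).
Proof. apply galois. eapply le_trans; [apply (le_join_sub a b)|].
 eapply le_trans; [apply join_mono; [apply (le_join_sub b c)|apply le_refl]|].
 unfold cle.
 apply join_lub; [apply join_lub|].
 - apply join_l.
 - eapply le_trans; [|apply join_r]. apply join_r.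
 - eapply le_trans; [|apply join_r]. apply join_l. Qed.
Lemma le_zero a : le a 0' -> a = 0'.
Proof. intros h. apply le_antisym; auto using le0. Qed.
Lemma sub_le_iff a b : le a b -> a -- b = 0'.
Proof. intros h. apply le_zero, galois. rewrite j0. exact h. Qed.
Lemma sub_join_r a b c : a -- (b \v c) = (a -- b) -- c.
Proof. apply le_antisym.
 - apply galois. eapply le_trans; [apply (le_join_sub a b)|].
   eapply le_trans; [apply join_mono; [apply le_refl|apply (le_join_sub (a -- b) c)]|].
   apply join_lub; [eapply le_trans; [apply join_l|apply join_l]|].
   apply join_lub; [eapply le_trans; [apply join_r|apply join_l]|apply join_r].
 - apply galois, galois. rewrite jA. apply le_join_sub. Qed.

Definition idl (J : T -> Prop) := J 0' /\ (forall x y, J y -> le x y -> J x) /\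
  (forall x y, J x -> J y -> J (x \v y)).
Definition flt (F : T -> Prop) := F 1' /\ (forall x y, F x -> le x y -> F y) /\
  (forall x y, F x -> F y -> F (x \^ y)).

Lemma pf_up p x y : prime_filter o p -> p x -> le x y -> p y.
Proof. intros hp; apply hp. Qed.
Lemma pf_meet p x y : prime_filter o p -> p x -> p y -> p (x \^ y).
Proof. intros hp; apply hp. Qed.
Lemma pf_join p x y : prime_filter o p -> p (x \v y) -> p x \/ p y.
Proof. intros hp; apply hp. Qed.
Lemma pf_one p : prime_filter o p -> p 1'.
Proof. intros hp; apply hp. Qed.
Lemma pf_zero p : prime_filter o p -> ~ p 0'.
Proof. intros hp; apply hp. Qed.

Lemma pft_max (F I : T -> Prop) : flt F -> idl I -> (forall x, F x -> I x -> False) ->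
  exists J, idl J /\ (forall x, I x -> J x) /\ (forall x, F x -> J x -> False) /\
   prime_filter o (fun x => ~ J x) /\
   (forall K, idl K -> (forall x, J x -> K x) -> (forall x, F x -> K x -> False) ->
      forall x, K x -> J x).
Proof.
intros hF hI hdis.
set (adm := fun K => idl K /\ (forall x, I x -> K x) /\ (forall x, F x -> K x -> False)).
destruct (ZornW.zorn_sets _ adm I) as [J [[hJ [hIJ hJF]] hmax]].
- split; [exact hI|split; [auto|exact hdis]].
- exists 0'. apply hI.
- intros C hC hch [X0 CX0]. split; [split; [|split]|split].
  + exists X0. split; auto. destruct (hC X0 CX0) as [[X00 _] _]. exact X00.
  + intros x y [X [CX Xy]] hxy. exists X. split; auto.
    destruct (hC X CX) as [[_ [Xd _]] _]. eauto.
  + intros x y [X [CX Xx]] [Y [CY Yy]]. destruct (hch X Y CX CY) as [h|h].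
    * exists Y. split; auto. destruct (hC Y CY) as [[_ [_ Yj]] _]. auto.
    * exists X. split; auto. destruct (hC X CX) as [[_ [_ Xj]] _]. auto.
  + intros x Ix. exists X0. split; auto. destruct (hC X0 CX0) as [_ [XI _]]. auto.
  + intros x Fx [X [CX Xx]]. destruct (hC X CX) as [_ [_ XF]]. eauto.
- assert (hmax' : forall K, idl K -> (forall x, J x -> K x) -> (forall x, F x -> K x -> False) ->
      forall x, K x -> J x).
  { intros K hK hJK hKF. apply hmax; auto. split; [auto|split; auto]. }
  exists J. split; [auto|split; [auto|split; [auto|split; [|auto]]]].
  destruct hJ as [J0 [Jdown Jjoin]].
  destruct hF as [F1 [Fup Fmeet]].
  assert (ext : forall x, ~ J x -> exists f j, F f /\ J j /\ le f (j \v x)).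
  { intros x nJx. apply NNPP. intros hno.
    set (K := fun z => exists j, J j /\ le z (j \v x)).
    assert (hK : idl K).
    { split; [|split].
      - exists 0'. split; auto. apply le0.
      - intros a b [j [Jj hb]] hab. exists j. split; auto. eapply le_trans; eauto.
      - intros a b [j [Jj ha]] [j' [Jj' hb]]. exists (j \v j'). split; auto.
        apply join_lub.
        + eapply le_trans; [exact ha|]. apply join_mono; [apply join_l|apply le_refl].
        + eapply le_trans; [exact hb|]. apply join_mono; [apply join_r|apply le_refl]. }
    assert (Kx : K x) by (exists 0'; split; auto; rewrite jC, j0; apply le_refl).
    apply nJx. apply (hmax' K hK).
    - intros z Jz. exists z. split; auto. apply join_l.
    - intros f Ff [j [Jj hf]]. apply hno. exists f, j. auto.
    - exact Kx. }
  split; [|split; [|split; [|split]]].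
  + intros J1. apply (hJF 1' F1 J1).
  + intros h; apply h, J0.
  + intros x y nJx hxy Jy. apply nJx. eapply Jdown; eauto.
  + intros x y nJx nJy Jxy.
    destruct (ext x nJx) as [f [j [Ff [Jj hf]]]].
    destruct (ext y nJy) as [f' [j' [Ff' [Jj' hf']]]].
    apply (hJF (f \^ f')); [apply Fmeet; auto|].
    apply Jdown with ((j \v j') \v (x \^ y)); [apply Jjoin; auto|].
    eapply le_trans; [apply meet_mono; [exact hf|exact hf']|].
    rewrite distr. apply join_lub.
    * eapply le_trans; [apply meet_r|]. eapply le_trans; [apply (join_r j j')|apply join_l].
    * rewrite mC, distr. apply join_lub.
      -- eapply le_trans; [apply meet_r|]. eapply le_trans; [apply (join_l j j')|apply join_l].
      -- eapply le_trans; [|apply join_r]. rewrite mC. apply le_refl.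
  + intros x y nJ. apply NNPP. intros hn. apply nJ.
    apply Jjoin; apply NNPP; intros h; apply hn; auto.
Qed.

Lemma flt_up (x : T) : flt (fun z => le x z).
Proof. split; [apply le1|split].
 - intros a b h1 h2. eapply le_trans; eauto.
 - intros a b h1 h2. apply meet_glb; auto. Qed.
Lemma idl_down (y : T) : idl (fun z => le z y).
Proof. split; [apply le0|split].
 - intros a b h1 h2. eapply le_trans; eauto.
 - intros a b h1 h2. apply join_lub; auto. Qed.

Lemma le_primes x y : (forall p, prime_filter o p -> p x -> p y) -> le x y.
Proof.
intros h. apply NNPP. intros nle.
destruct (pft_max (fun z => le x z) (fun z => le z y) (flt_up x) (idl_down y)) as
  [J [hJ [hIJ [hJF [hp _]]]]].
- intros z h1 h2. apply nle. eapply le_trans; eauto.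
- apply (h _ hp).
  + intros Jx. apply (hJF x (le_refl x) Jx).
  + apply hIJ, le_refl.
Qed.

Lemma sub_prime p c g : prime_filter o p -> p c -> p (g -- c) ->
  exists q, prime_filter o q /\ (forall x, q x -> p x) /\ q g /\ ~ q c.
Proof.
intros hp pc pgc.
set (I := fun z => exists y, ~ p y /\ le z (c \v y)).
assert (hI : idl I).
{ split; [|split].
  - exists 0'. split; [apply (pf_zero p hp)|apply le0].
  - intros a b [y [py hb]] hab. exists y. split; auto. eapply le_trans; eauto.
  - intros a b [y [py ha]] [y' [py' hb]]. exists (y \v y'). split.
    + intros hj. destruct (pf_join p y y' hp hj); auto.
    + apply join_lub.
      * eapply le_trans; [exact ha|]. apply join_mono; [apply le_refl|apply join_l].
      * eapply le_trans; [exact hb|]. apply join_mono; [apply le_refl|apply join_r]. }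
destruct (pft_max (fun z => le g z) I (flt_up g) hI) as [J [hJ [hIJ [hJF [hq _]]]]].
- intros z hgz [y [py hz]]. apply py. apply (pf_up p (g -- c)); auto.
  apply galois. eapply le_trans; eauto.
- exists (fun x => ~ J x). split; [exact hq|split; [|split]].
  + intros x nJx. apply NNPP. intros npx. apply nJx, hIJ. exists x. split; auto. apply join_r.
  + intros Jg. apply (hJF g (le_refl g) Jg).
  + intros nJc. apply nJc, hIJ. exists 0'. split; [apply (pf_zero p hp)|]. rewrite j0. apply le_refl.
Qed.

Lemma heightGe_S p k : heightGe o p (S k) -> heightGe o p k.
Proof.
revert p. induction k as [|k IH]; intros p h; [exact I|].
destruct h as [q [hq [hs hh]]]. exists q. split; auto.
Qed.
Lemma heightGe_le p k m : (k <= m)%nat -> heightGe o p m -> heightGe o p k.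
Proof. intros hkm. induction hkm; auto. intros h. apply IHhkm, heightGe_S, h. Qed.
Lemma codimGe_le a k m : (k <= m)%nat -> codimGe o a m -> codimGe o a k.
Proof. intros hkm h p hp pa. eapply heightGe_le; eauto. Qed.
Lemma codimGe_down a b k : le a b -> codimGe o b k -> codimGe o a k.
Proof. intros hab h p hp pa. apply h; auto. eapply pf_up; eauto. Qed.
Lemma codimGe_join a b k : codimGe o a k -> codimGe o b k -> codimGe o (a \v b) k.
Proof. intros ha hb p hp pab. destruct (pf_join p a b hp pab); auto. Qed.
Lemma codimGe_zero k : codimGe o 0' k.
Proof. intros p hp p0. exfalso. apply (pf_zero p hp p0). Qed.

Fixpoint Aset (k : nat) (c : T) : Prop :=
  match k with
  | O => True
  | S k => exists g, Aset k g /\ le c (g -- c)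
  end.

Lemma Aset_down k a b : le a b -> Aset k b -> Aset k a.
Proof. destruct k as [|k]; simpl; auto. intros hab [g [hg hb]]. exists g. split; auto.
 eapply le_trans; [exact hab|]. eapply le_trans; [exact hb|]. apply sub_anti_r, hab. Qed.
Lemma Aset_S k c : Aset (S k) c -> Aset k c.
Proof. revert c. induction k as [|k IH]; intros c h; [exact I|].
 destruct h as [g [hg hc]]. exists g. split; auto. Qed.
Lemma Aset_le k m c : (k <= m)%nat -> Aset m c -> Aset k c.
Proof. intros hkm. induction hkm; auto. intros h. apply IHhkm, Aset_S, h. Qed.
Lemma Aset_zero k : Aset k 0'.
Proof. induction k as [|k IH]; simpl; auto. exists 0'. split; auto. apply le0. Qed.

Lemma codim_step c g m : le c (g -- c) -> codimGe o g m -> codimGe o c (S m).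
Proof.
intros hc hg p hp pc.
destruct (sub_prime p c g hp pc) as [q [hq [hqp [qg nqc]]]].
- eapply pf_up; eauto.
- exists q. split; auto. split; [split; auto; exists c; auto|]. apply hg; auto.
Qed.
Lemma Aset_codim k c : Aset k c -> codimGe o c k.
Proof. revert c. induction k as [|k IH]; intros c h.
 - intros p _ _. exact I.
 - destruct h as [g [hg hc]]. eapply codim_step; eauto. Qed.

Lemma height_Aset k p : prime_filter o p -> heightGe o p k -> exists c, p c /\ Aset k c.
Proof.
revert p. induction k as [|k IH]; intros p hp h.
- exists 1'. split; [apply (pf_one p hp)|exact I].
- destruct h as [q [hq [[hqp [b [pb nqb]]] hh]]].
  destruct (IH q hq hh) as [g [qg hg]].
  assert (qgb : q (g -- b)).
  { destruct (pf_join q b (g -- b) hq) as [h|h]; [|contradiction|exact h].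
    eapply pf_up; eauto. apply le_join_sub. }
  exists (b \^ (g -- b)). split.
  + apply pf_meet; auto.
  + exists g. split; auto. eapply le_trans; [apply meet_r|]. apply sub_anti_r, meet_l.
Qed.

Lemma joinJ x e G h : le x (G -- x) -> le e (h -- e) -> le (x \v e) ((G \v h) -- (x \v e)).
Proof.
intros hx he. set (s := x \v e).
assert (Q : forall q, prime_filter o q -> q e -> ~ q x -> q ((G \v h) -- s)).
{ intros q hq qe nqx.
  destruct (sub_prime q e h hq qe) as [q' [hq' [hq'q [q'h nq'e]]]].
  { eapply pf_up; eauto. }
  assert (nq's : ~ q' s).
  { intros qs. destruct (pf_join q' x e hq' qs); auto. }
  assert (q'hs : q' (h -- s)).
  { destruct (pf_join q' s (h -- s) hq') as [h1|h1]; [|contradiction|exact h1].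
    eapply pf_up; eauto. apply le_join_sub. }
  apply hq'q. eapply pf_up; eauto. apply sub_mono_l, join_r. }
apply le_primes. intros p hp ps.
destruct (pf_join p x e hp ps) as [px|pe].
- destruct (sub_prime p x G hp px) as [q [hq [hqp [qG nqx]]]].
  { eapply pf_up; eauto. }
  destruct (classic (q e)) as [qe|nqe].
  + apply hqp. apply Q; auto.
  + apply hqp.
    assert (nqs : ~ q s). { intros qs. destruct (pf_join q x e hq qs); auto. }
    destruct (pf_join q s (G -- s) hq) as [h1|h1]; [|contradiction|].
    * eapply pf_up; eauto. apply le_join_sub.
    * eapply pf_up; eauto. apply sub_mono_l, join_l.
- destruct (classic (p x)) as [px|npx].
  + destruct (sub_prime p x G hp px) as [q [hq [hqp [qG nqx]]]].
    { eapply pf_up; eauto. }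
    destruct (classic (q e)) as [qe|nqe].
    * apply hqp. apply Q; auto.
    * apply hqp.
      assert (nqs : ~ q s). { intros qs. destruct (pf_join q x e hq qs); auto. }
      destruct (pf_join q s (G -- s) hq) as [h1|h1]; [|contradiction|].
      -- eapply pf_up; eauto. apply le_join_sub.
      -- eapply pf_up; eauto. apply sub_mono_l, join_l.
  + apply Q; auto.
Qed.

Lemma Aset_join k a b : Aset k a -> Aset k b -> Aset k (a \v b).
Proof. revert a b. induction k as [|k IH]; intros a b ha hb; [exact I|].
 destruct ha as [g [hg ha]]. destruct hb as [g' [hg' hb]].
 exists (g \v g'). split; auto. apply joinJ; auto. Qed.

Lemma codim_Aset k c : codimGe o c k -> Aset k c.
Proof.
revert c. induction k as [|k IH]; intros c hc; [exact I|].
apply NNPP. intros nA.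
set (I := fun y => exists g, Aset k g /\ le y (g -- c)).
assert (hI : idl I).
{ split; [|split].
  - exists 0'. split; [apply Aset_zero|apply le0].
  - intros a b [g [hg hb]] hab. exists g. split; auto. eapply le_trans; eauto.
  - intros a b [g [hg ha]] [g' [hg' hb]]. exists (g \v g'). split; [apply Aset_join; auto|].
    rewrite sub_join_l_eq. apply join_mono; auto. }
destruct (pft_max (fun z => le c z) I (flt_up c) hI) as [J [hJ [hIJ [hJF [hp hmax]]]]].
- intros z hcz [g [hg hz]]. apply nA. exists g. split; auto.
  eapply le_trans; eauto.
- assert (pc : ~ J c) by (intros Jc; apply (hJF c (le_refl c) Jc)).
  specialize (hc _ hp pc). destruct hc as [q [hq [[hqp [b [pb nqb]]] hh]]].
  destruct (height_Aset k q hq hh) as [g [qg hg]].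
  assert (nqc : ~ q c).
  { intros qc. apply pb. apply (hmax (fun x => ~ q x)).
    - split; [apply (pf_zero q hq)|split].
      + intros x y ny hxy qx. apply ny. eapply pf_up; eauto.
      + intros x y nx ny qxy. destruct (pf_join q x y hq qxy); auto.
    - intros x Jx qx. apply (hqp x qx Jx).
    - intros x hcx qx. apply qx. eapply pf_up; eauto.
    - exact nqb. }
  assert (qgc : q (g -- c)).
  { destruct (pf_join q c (g -- c) hq) as [h1|h1]; [|contradiction|exact h1].
    eapply pf_up; eauto. apply le_join_sub. }
  apply (hqp _ qgc). apply hIJ. exists g. split; auto. apply le_refl.
Qed.

Lemma symdiff_zero c : symdiff o c 0' = c.
Proof. unfold symdiff. rewrite sub_zero, zero_sub, j0. reflexivity. Qed.
Lemma symdiff_comm a b : symdiff o a b = symdiff o b a.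
Proof. unfold symdiff. apply jC. Qed.
End Gen.

Section Codist.
Variables (T : Type) (o : coHOps T).

Lemma codim_is_unique c n m : codim_is o c n -> codim_is o c m -> n = m.
Proof.
intros [h1 h2] [h3 h4].
destruct (Nat.lt_trichotomy n m) as [l|[e|l]]; auto.
- exfalso. apply h2. eapply codimGe_le; [|exact h3]. lia.
- exfalso. apply h4. eapply codimGe_le; [|exact h1]. lia.
Qed.

Lemma not_all_codim c k : ~ codimGe o c k -> exists n, codim_is o c n.
Proof.
induction k as [|k IH]; intros h.
- exfalso. apply h. intros p _ _. exact I.
- destruct (classic (codimGe o c k)) as [hk|hk].
  + exists k. split; auto.
  + apply IH, hk.
Qed.

Lemma pow2_pos n : 0 < 2 ^ n.
Proof. apply pow_lt. lra. Qed.
Lemma inv_pow2_pos n : 0 < / 2 ^ n.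
Proof. apply Rinv_0_lt_compat, pow2_pos. Qed.
Lemma pow2_le n m : (n <= m)%nat -> 2 ^ n <= 2 ^ m.
Proof. intros h. apply Rle_pow; auto; lra. Qed.
Lemma inv_pow2_le n m : (n <= m)%nat -> / 2 ^ m <= / 2 ^ n.
Proof. intros h. apply Rinv_le_contravar; [apply pow2_pos|apply pow2_le, h]. Qed.
Lemma inv_pow2_lt n m : (n < m)%nat -> / 2 ^ m < / 2 ^ n.
Proof. intros h. apply Rinv_lt_contravar; [apply Rmult_lt_0_compat; apply pow2_pos|].
 apply Rlt_pow; auto; lra. Qed.
Lemma inv_pow2_S n : / 2 ^ (S n) = / 2 ^ n / 2.
Proof. simpl. field. apply Rgt_not_eq, pow2_pos. Qed.

Lemma codist_cases a b :
  (codist o a b = 0 /\ forall k, codimGe o (symdiff o a b) k) \/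
  (exists n, codist o a b = / 2 ^ n /\ codim_is o (symdiff o a b) n).
Proof.
unfold codist. destruct (excluded_middle_informative _) as [e|ne].
- right. pose proof (epsilon_spec (inhabits 0%nat) _ e) as hs.
  eexists. split; [reflexivity|exact hs].
- left. split; auto. intros k. apply NNPP. intros hk. apply ne. eapply not_all_codim; eauto.
Qed.

Lemma codist_nonneg a b : 0 <= codist o a b.
Proof. destruct (codist_cases a b) as [[-> _]|[n [-> _]]]; [lra|]. left; apply inv_pow2_pos. Qed.

Lemma codist_le_iff a b k : codist o a b <= / 2 ^ k <-> codimGe o (symdiff o a b) k.
Proof.
destruct (codist_cases a b) as [[-> hall]|[n [-> [h1 h2]]]].
- split; auto. intros _. left; apply inv_pow2_pos.
- split; intros h.
  + eapply codimGe_le; [|exact h1].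
    destruct (Compare_dec.le_lt_dec k n) as [l|l]; auto.
    exfalso. pose proof (inv_pow2_lt n k l). lra.
  + apply inv_pow2_le. destruct (Compare_dec.le_lt_dec k n) as [l|l]; auto.
    exfalso. apply h2. eapply codimGe_le; [|exact h]. lia.
Qed.

Lemma codist_disc a b k : codist o a b < / 2 ^ k -> codist o a b <= / 2 ^ (S k).
Proof.
destruct (codist_cases a b) as [[-> hall]|[n [-> [h1 h2]]]].
- intros _. left; apply inv_pow2_pos.
- intros h. apply inv_pow2_le. destruct (Compare_dec.le_lt_dec (S k) n) as [l|l]; auto.
  exfalso. pose proof (inv_pow2_le n k ltac:(lia)). lra.
Qed.
End Codist.
Lemma coH_of_eqs (T : Type) (o : coHOps T) : is_bdl o ->
  (forall a b, cjoin o a (cjoin o b (csub o a b)) = cjoin o b (csub o a b)) ->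
  (forall x y z, csub o (cjoin o x y) z = cjoin o (csub o x z) (csub o y z)) ->
  (forall x y, cjoin o (csub o x y) x = x) ->
  (forall x, csub o x x = czero o) -> is_coHeyting o.
Proof.
intros hb E0 E1 E2 E4. split; [exact hb|].
destruct hb as [jA [mA [jC [mC [abs1 [abs2 [dis [j0 m1]]]]]]]].
intros a b. split; [apply E0|]. intros c hc. unfold cle in *.
assert (e1 : csub o (cjoin o b c) b = csub o c b).
{ rewrite E1, E4, jC, j0. reflexivity. }
assert (e2 : cjoin o (csub o a b) (csub o c b) = csub o c b).
{ rewrite <- e1, <- E1, hc. reflexivity. }
transitivity (cjoin o (csub o a b) (cjoin o (csub o c b) c)).
{ rewrite E2; reflexivity. }
rewrite jA, e2. apply E2.
Qed.

Section Compl.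
Variables (L L' : Type) (o : coHOps L) (o' : coHOps L') (d' : L' -> L' -> R) (i : L -> L').
Hypothesis HL : is_coHeyting o.
Hypothesis Hc : is_completion (codist o) d' i.
Hypothesis He : extends_by_continuity o o' d' i.

Lemma dpos x y : 0 <= d' x y. Proof. apply Hc. Qed.
Lemma dzero x y : d' x y = 0 <-> x = y. Proof. apply Hc. Qed.
Lemma dsym x y : d' x y = d' y x. Proof. apply Hc. Qed.
Lemma dtri x y z : d' x z <= d' x y + d' y z. Proof. apply Hc. Qed.
Lemma dcomp : complete_metric d'. Proof. apply Hc. Qed.
Lemma diso a b : d' (i a) (i b) = codist o a b. Proof. apply Hc. Qed.
Lemma ddense x eps : 0 < eps -> exists a, d' x (i a) < eps. Proof. apply Hc. Qed.
Lemma h0 : czero o' = i (czero o). Proof. apply He. Qed.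
Lemma h1 : cone o' = i (cone o). Proof. apply He. Qed.
Lemma hj a b : cjoin o' (i a) (i b) = i (cjoin o a b). Proof. apply He. Qed.
Lemma hm a b : cmeet o' (i a) (i b) = i (cmeet o a b). Proof. apply He. Qed.
Lemma hs a b : csub o' (i a) (i b) = i (csub o a b). Proof. apply He. Qed.
Lemma cj : continuous2 d' (cjoin o'). Proof. apply He. Qed.
Lemma cm : continuous2 d' (cmeet o'). Proof. apply He. Qed.
Lemma cs : continuous2 d' (csub o'). Proof. apply He. Qed.

Lemma dself x : d' x x = 0. Proof. apply dzero. reflexivity. Qed.

Lemma pow2_gt n : INR n < 2 ^ n.
Proof. induction n as [|n IH]; [simpl; lra|]. rewrite S_INR.
 replace (2 ^ S n) with (2 * 2 ^ n) by reflexivity.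
 assert (1 <= 2 ^ n) by (apply pow_R1_Rle; lra). lra. Qed.
Lemma small_pow eps : 0 < eps -> exists N, / 2 ^ N < eps.
Proof.
intros he. destruct (archimed_cor1 eps he) as [N [hN hN0]].
exists N. eapply Rlt_trans; [|exact hN]. apply Rinv_lt_contravar.
- apply Rmult_lt_0_compat; [apply lt_0_INR; auto|apply pow2_pos].
- apply pow2_gt.
Qed.

Definition cont3 (f : L' -> L' -> L' -> L') := forall x y z eps, 0 < eps ->
  exists delta, 0 < delta /\ forall x' y' z', d' x x' < delta -> d' y y' < delta ->
    d' z z' < delta -> d' (f x y z) (f x' y' z') < eps.

Lemma cont3_p1 : cont3 (fun x y z => x).
Proof. intros x y z eps he. exists eps. split; auto. Qed.
Lemma cont3_p2 : cont3 (fun x y z => y).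
Proof. intros x y z eps he. exists eps. split; auto. Qed.
Lemma cont3_p3 : cont3 (fun x y z => z).
Proof. intros x y z eps he. exists eps. split; auto. Qed.
Lemma cont3_c c : cont3 (fun x y z => c).
Proof. intros x y z eps he. exists 1. split; [lra|]. intros. rewrite dself. auto. Qed.
Lemma cont3_op op f g : continuous2 d' op -> cont3 f -> cont3 g ->
  cont3 (fun x y z => op (f x y z) (g x y z)).
Proof.
intros hop hf hg x y z eps he.
destruct (hop (f x y z) (g x y z) eps he) as [d0 [hd0 hd]].
destruct (hf x y z d0 hd0) as [d1 [hd1 h1']].
destruct (hg x y z d0 hd0) as [d2 [hd2 h2']].
exists (Rmin d1 d2). split; [apply Rmin_glb_lt; auto|].
intros x' y' z' e1 e2 e3. apply hd.
- apply h1'; eapply Rlt_le_trans; eauto using Rmin_l.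
- apply h2'; eapply Rlt_le_trans; eauto using Rmin_r.
Qed.

Ltac solve_cont := repeat first
  [ apply cont3_p1 | apply cont3_p2 | apply cont3_p3 | apply cont3_c
  | apply (cont3_op _ _ _ cj) | apply (cont3_op _ _ _ cm) | apply (cont3_op _ _ _ cs) ].

Lemma dense_seq x : exists a : nat -> L, forall n, d' x (i (a n)) < / 2 ^ n.
Proof.
exists (fun n => epsilon (inhabits (czero o)) (fun a => d' x (i a) < / 2 ^ n)).
intros n. apply (epsilon_spec (inhabits (czero o)) (fun a => d' x (i a) < / 2 ^ n)).
apply ddense, inv_pow2_pos.
Qed.

Lemma conv_of_pow (u : nat -> L') x : (forall n, d' x (u n) < / 2 ^ n) -> seq_converges_to d' u x.
Proof.
intros h eps he. destruct (small_pow eps he) as [N hN]. exists N. intros n hn.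
rewrite dsym. eapply Rlt_le_trans; [apply h|]. eapply Rle_trans; [apply inv_pow2_le, hn|]. lra.
Qed.

Lemma conv_cont f u v w x y z : cont3 f -> seq_converges_to d' u x -> seq_converges_to d' v y ->
  seq_converges_to d' w z -> seq_converges_to d' (fun n => f (u n) (v n) (w n)) (f x y z).
Proof.
intros hf hu hv hw eps he.
destruct (hf x y z eps he) as [dl [hdl hd]].
destruct (hu dl hdl) as [N1 hN1]. destruct (hv dl hdl) as [N2 hN2].
destruct (hw dl hdl) as [N3 hN3].
exists (N1 + N2 + N3)%nat. intros n hn. rewrite dsym. apply hd.
- rewrite dsym; apply hN1; lia.
- rewrite dsym; apply hN2; lia.
- rewrite dsym; apply hN3; lia.
Qed.

Lemma conv_unique u x y : seq_converges_to d' u x -> seq_converges_to d' u y -> x = y.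
Proof.
intros hx hy. apply dzero. apply Rle_antisym; [|apply dpos].
apply Rnot_lt_le. intros hpos.
destruct (hx (d' x y / 2)) as [N1 hN1]; [lra|].
destruct (hy (d' x y / 2)) as [N2 hN2]; [lra|].
pose proof (hN1 (N1 + N2)%nat ltac:(lia)) as e1. pose proof (hN2 (N1 + N2)%nat ltac:(lia)) as e2.
pose proof (dtri x (u (N1 + N2)%nat) y) as e3. rewrite (dsym x (u _)) in e3. lra.
Qed.

Lemma ident3 f g : cont3 f -> cont3 g ->
  (forall a b c, f (i a) (i b) (i c) = g (i a) (i b) (i c)) -> forall x y z, f x y z = g x y z.
Proof.
intros hf hg hfg x y z.
destruct (dense_seq x) as [a ha]. destruct (dense_seq y) as [b hb]. destruct (dense_seq z) as [c hc].
pose proof (conv_cont f _ _ _ x y z hf (conv_of_pow _ _ ha) (conv_of_pow _ _ hb) (conv_of_pow _ _ hc)) as c1.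
pose proof (conv_cont g _ _ _ x y z hg (conv_of_pow _ _ ha) (conv_of_pow _ _ hb) (conv_of_pow _ _ hc)) as c2.
eapply conv_unique; [exact c1|]. intros eps he. destruct (c2 eps he) as [N hN]. exists N.
intros n hn. rewrite hfg. apply hN, hn.
Qed.

Ltac push := repeat (rewrite ?h0, ?h1, ?hj, ?hm, ?hs).

Lemma Hco' : is_coHeyting o'.
Proof.
apply coH_of_eqs; [split; [|split; [|split; [|split; [|split; [|split; [|split; [|split]]]]]]]|..].
- intros x y z. apply (ident3 (fun x y z => cjoin o' x (cjoin o' y z)) (fun x y z => cjoin o' (cjoin o' x y) z)); [solve_cont|solve_cont|].
  intros a b c. push. f_equal. apply (jA _ _ HL).
- intros x y z. apply (ident3 (fun x y z => cmeet o' x (cmeet o' y z)) (fun x y z => cmeet o' (cmeet o' x y) z)); [solve_cont|solve_cont|].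
  intros a b c. push. f_equal. apply (mA _ _ HL).
- intros x y. refine (ident3 (fun x y _ => cjoin o' x y) (fun x y _ => cjoin o' y x) _ _ _ x y x); [solve_cont|solve_cont|].
  intros a b c. push. f_equal. apply (jC _ _ HL).
- intros x y. refine (ident3 (fun x y _ => cmeet o' x y) (fun x y _ => cmeet o' y x) _ _ _ x y x); [solve_cont|solve_cont|].
  intros a b c. push. f_equal. apply (mC _ _ HL).
- intros x y. refine (ident3 (fun x y _ => cjoin o' x (cmeet o' x y)) (fun x y _ => x) _ _ _ x y x); [solve_cont|solve_cont|].
  intros a b c. push. f_equal. apply (abs1 _ _ HL).
- intros x y. refine (ident3 (fun x y _ => cmeet o' x (cjoin o' x y)) (fun x y _ => x) _ _ _ x y x); [solve_cont|solve_cont|].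
  intros a b c. push. f_equal. apply (abs2 _ _ HL).
- intros x y z. apply (ident3 (fun x y z => cmeet o' x (cjoin o' y z)) (fun x y z => cjoin o' (cmeet o' x y) (cmeet o' x z))); [solve_cont|solve_cont|].
  intros a b c. push. f_equal. apply (distr _ _ HL).
- intros x. refine (ident3 (fun x _ _ => cjoin o' x (czero o')) (fun x _ _ => x) _ _ _ x x x); [solve_cont|solve_cont|].
  intros a b c. push. f_equal. apply (j0 _ _ HL).
- intros x. refine (ident3 (fun x _ _ => cmeet o' x (cone o')) (fun x _ _ => x) _ _ _ x x x); [solve_cont|solve_cont|].
  intros a b c. push. f_equal. apply (m1 _ _ HL).
- intros x y. refine (ident3 (fun x y _ => cjoin o' x (cjoin o' y (csub o' x y))) (fun x y _ => cjoin o' y (csub o' x y)) _ _ _ x y x); [solve_cont|solve_cont|].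
  intros a b c. push. f_equal. apply (proj1 (subH _ _ HL a b)).
- intros x y z. apply (ident3 (fun x y z => csub o' (cjoin o' x y) z) (fun x y z => cjoin o' (csub o' x z) (csub o' y z))); [solve_cont|solve_cont|].
  intros a b c. push. f_equal. apply (sub_join_l_eq _ _ HL).
- intros x y. refine (ident3 (fun x y _ => cjoin o' (csub o' x y) x) (fun x y _ => x) _ _ _ x y x); [solve_cont|solve_cont|].
  intros a b c. push. f_equal. apply (sub_le _ _ HL).
- intros x. refine (ident3 (fun x _ _ => csub o' x x) (fun x _ _ => czero o') _ _ _ x x x); [solve_cont|solve_cont|].
  intros a b c. push. f_equal. apply (sub_self _ _ HL).
Qed.

Definition Nm x := d' x (czero o').

Lemma N_i a : Nm (i a) = codist o a (czero o).
Proof. unfold Nm. rewrite h0. apply diso. Qed.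

Lemma codim_N a k : codimGe o a k <-> codist o a (czero o) <= / 2 ^ k.
Proof. rewrite (codist_le_iff _ o), (symdiff_zero _ _ HL). tauto. Qed.

Lemma codist_disc2 a b k : codist o a b < 2 * / 2 ^ k -> codist o a b <= / 2 ^ k.
Proof.
destruct (codist_cases _ o a b) as [[-> _]|[n [-> _]]].
- intros _. left; apply inv_pow2_pos.
- intros h. apply inv_pow2_le. destruct (Compare_dec.le_lt_dec k n) as [l|l]; auto.
  exfalso. pose proof (inv_pow2_le (S n) k l) as e. rewrite inv_pow2_S in e. lra.
Qed.

Lemma N_tri x y : Nm x <= d' x y + Nm y.
Proof. apply dtri. Qed.

Lemma N_closed u x r : seq_converges_to d' u x -> (forall n, Nm (u n) <= r) -> Nm x <= r.
Proof.
intros hu hr. apply Rnot_lt_le. intros hlt.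
destruct (hu (Nm x - r)) as [N hN]; [lra|].
pose proof (hN N (le_n N)) as e1. pose proof (N_tri x (u N)) as e2.
rewrite dsym in e1. pose proof (hr N). lra.
Qed.

Lemma conv_dseq x (a : nat -> L) k : (forall n, d' x (i (a n)) < / 2 ^ (n + k)) ->
  seq_converges_to d' (fun n => i (a n)) x.
Proof.
intros h. apply conv_of_pow. intros n. eapply Rlt_le_trans; [apply h|]. apply inv_pow2_le. lia.
Qed.

Lemma dense_seq_k x k : exists a : nat -> L, forall n, d' x (i (a n)) < / 2 ^ (n + k).
Proof.
exists (fun n => epsilon (inhabits (czero o)) (fun a => d' x (i a) < / 2 ^ (n + k))).
intros n. apply (epsilon_spec (inhabits (czero o)) (fun a => d' x (i a) < / 2 ^ (n + k))).
apply ddense, inv_pow2_pos.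
Qed.

Lemma small_codim x a k : Nm x <= / 2 ^ k -> d' x (i a) < / 2 ^ k -> codimGe o a k.
Proof.
intros hx hd. apply codim_N. apply codist_disc2. rewrite <- N_i.
pose proof (N_tri (i a) x) as e. rewrite dsym in e. lra.
Qed.

Lemma Aset_N k z : Aset _ o' k z -> Nm z <= / 2 ^ k.
Proof.
revert z. induction k as [|k IH]; intros z hz.
- apply Rnot_lt_le. intros hlt. replace (/ 2 ^ 0) with 1 in hlt by (simpl; lra).
  destruct (ddense z (Nm z - 1)) as [a ha]; [lra|].
  pose proof (N_tri z (i a)) as e. rewrite N_i in e.
  destruct (codist_cases _ o a (czero o)) as [[e0 _]|[n [e0 _]]]; rewrite e0 in e.
  + lra.
  + assert (/ 2 ^ n <= 1) by (replace 1 with (/ 2 ^ 0) by (simpl; lra); apply inv_pow2_le; lia). lra.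
- destruct hz as [g [hg hzg]]. specialize (IH g hg).
  destruct (dense_seq_k z (S k)) as [a ha]. destruct (dense_seq_k g (S k)) as [b hb].
  set (F := fun x y (_ : L') => cmeet o' x (csub o' y x)).
  assert (hF : cont3 F) by (unfold F; solve_cont).
  pose proof (conv_cont F _ _ (fun n => i (a n)) z g z hF (conv_dseq _ _ _ ha) (conv_dseq _ _ _ hb) (conv_dseq _ _ _ ha)) as hc.
  assert (eF : F z g z = z).
  { unfold F. apply (le_meet _ _ (Hco')). exact hzg. }
  rewrite eF in hc. apply (N_closed _ _ _ hc). intros n. unfold F.
  rewrite hs, hm, N_i. apply codim_N.
  apply (codim_step _ _ HL _ (b n) k).
  + eapply le_trans; [exact HL|apply meet_r; exact HL|]. apply sub_anti_r; [exact HL|]. apply meet_l; exact HL.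
  + apply small_codim with g; auto. eapply Rlt_le_trans; [apply hb|]. apply inv_pow2_le. lia.
Qed.

Lemma N_Aset k : forall z, Nm z <= / 2 ^ k -> Aset _ o' k z.
Proof.
induction k as [|k IH]; intros z hz; [exact I|].
destruct (dense_seq_k z (k + 3)) as [a ha].
assert (ca : forall n, codimGe o (a n) (S k)).
{ intros n. apply small_codim with z; auto. eapply Rlt_le_trans; [apply ha|]. apply inv_pow2_le. lia. }
set (e := fun n => csub o (a (S n)) (a n)).
assert (ce : forall n, codimGe o (e n) (S (n + k + 2))).
{ intros n. apply (codimGe_down _ o) with (symdiff o (a n) (a (S n))); [apply (join_r _ _ HL)|].
  apply (codist_le_iff _ o). replace (S (n + k + 2)) with (n + (k + 3))%nat by lia.
  apply codist_disc2. rewrite <- diso.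
  pose proof (dtri (i (a n)) z (i (a (S n)))) as t. rewrite (dsym (i (a n)) z) in t.
  pose proof (ha n). pose proof (ha (S n)).
  assert (/ 2 ^ (S n + (k + 3)) <= / 2 ^ (n + (k + 3))) by (apply inv_pow2_le; lia). lra. }
assert (hg0 : exists g, Aset _ o k g /\ cle o (a 0%nat) (csub o g (a 0%nat))).
{ apply (codim_Aset _ _ HL (S k)). apply ca. }
assert (hh : forall n, exists h, Aset _ o (n + k + 2) h /\ cle o (e n) (csub o h (e n))).
{ intros n. apply (codim_Aset _ _ HL (S (n + k + 2))). apply ce. }
set (g0 := epsilon (inhabits (czero o)) (fun g => Aset _ o k g /\ cle o (a 0%nat) (csub o g (a 0%nat)))).
assert (hg0' : Aset _ o k g0 /\ cle o (a 0%nat) (csub o g0 (a 0%nat))) by (apply epsilon_spec; exact hg0).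
set (h := fun n => epsilon (inhabits (czero o)) (fun h => Aset _ o (n + k + 2) h /\ cle o (e n) (csub o h (e n)))).
assert (hh' : forall n, Aset _ o (n + k + 2) (h n) /\ cle o (e n) (csub o (h n) (e n))).
{ intros n. apply (epsilon_spec (inhabits (czero o)) (fun h => Aset _ o (n + k + 2) h /\ cle o (e n) (csub o h (e n)))). apply hh. }
set (G := fun n => nat_rect (fun _ => L) g0 (fun m acc => cjoin o acc (h m)) n).
assert (GS : forall n, G (S n) = cjoin o (G n) (h n)) by reflexivity.
assert (G0 : G 0%nat = g0) by reflexivity.
assert (inv : forall n, Aset _ o k (G n) /\ cle o (a n) (csub o (G n) (a n))).
{ induction n as [|n [IH1 IH2]]; [rewrite G0; exact hg0'|]. rewrite GS. split.
  - apply (Aset_join _ _ HL); auto. apply (Aset_le _ o k (n + k + 2)); [lia|apply hh'].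
  - apply (le_trans _ _ HL) with (cjoin o (a n) (e n)); [apply (le_join_sub _ _ HL)|].
    apply (le_trans _ _ HL) with (csub o (cjoin o (G n) (h n)) (cjoin o (a n) (e n))).
    + apply (joinJ _ _ HL); auto. apply hh'.
    + apply (sub_anti_r _ _ HL). apply (le_join_sub _ _ HL). }
assert (Gmono : forall n m, (n <= m)%nat -> cle o (G n) (G m)).
{ intros n m hnm. induction hnm; [apply (le_refl _ _ HL)|].
  rewrite GS. apply (le_trans _ _ HL) with (G m); auto. apply (join_l _ _ HL). }
assert (Gsub : forall n m, (n <= m)%nat -> codimGe o (csub o (G m) (G n)) (n + k + 2)).
{ intros n m hnm. induction hnm.
  - rewrite (sub_self _ _ HL). apply (codimGe_zero _ o).
  - rewrite GS, (sub_join_l_eq _ _ HL). apply (codimGe_join _ o); auto.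
    apply (codimGe_down _ o) with (h m); [apply (sub_le _ _ HL)|].
    apply (codimGe_le _ o) with (m + k + 2)%nat; [lia|]. apply (Aset_codim _ _ HL). apply hh'. }
assert (Gd : forall n m, (n <= m)%nat -> d' (i (G n)) (i (G m)) <= / 2 ^ (n + k + 2)).
{ intros n m hnm. rewrite diso. apply (codist_le_iff _ o). unfold symdiff.
  rewrite (sub_le_iff _ _ HL (G n) (G m)); [|apply Gmono; auto].
  apply (codimGe_join _ o); [apply (codimGe_zero _ o)|auto]. }
assert (hcs : cauchy_seq d' (fun n => i (G n))).
{ intros eps heps. destruct (small_pow eps heps) as [N hN]. exists N. intros m n hm hn.
  destruct (Compare_dec.le_lt_dec m n) as [l|l].
  - eapply Rle_lt_trans; [apply Gd; auto|]. eapply Rle_lt_trans; [|exact hN]. apply inv_pow2_le. lia.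
  - rewrite dsym. eapply Rle_lt_trans; [apply Gd; lia|]. eapply Rle_lt_trans; [|exact hN]. apply inv_pow2_le. lia. }
destruct (dcomp _ hcs) as [G' hG'].
assert (NG' : Nm G' <= / 2 ^ k).
{ apply (N_closed _ _ _ hG'). intros n. rewrite N_i. apply codim_N. apply (Aset_codim _ _ HL). apply inv. }
exists G'. split; [apply IH; exact NG'|].
set (F1 := fun x y (_ : L') => cjoin o' x (csub o' y x)).
set (F2 := fun (x y _ : L') => csub o' y x).
assert (hF1 : cont3 F1) by (unfold F1; solve_cont).
assert (hF2 : cont3 F2) by (unfold F2; solve_cont).
assert (cz : seq_converges_to d' (fun n => i (a n)) z) by (apply (conv_dseq _ _ (k + 3)); auto).
pose proof (conv_cont F1 _ _ _ z G' z hF1 cz hG' cz) as c1.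
pose proof (conv_cont F2 _ _ _ z G' z hF2 cz hG' cz) as c2.
change (F1 z G' z = F2 z G' z).
eapply conv_unique; [exact c1|]. intros eps he. destruct (c2 eps he) as [N hN]. exists N.
intros n hn. unfold F1, F2 in *. rewrite hs, hj. rewrite (proj2 (inv n)). rewrite <- hs. apply hN, hn.
Qed.

Lemma Kchar w k : codimGe o' w k <-> Nm w <= / 2 ^ k.
Proof. split; intros h.
- apply Aset_N. apply (codim_Aset _ _ Hco'). exact h.
- apply (Aset_codim _ _ Hco'). apply N_Aset. exact h. Qed.

Lemma i_symdiff a b : i (symdiff o a b) = symdiff o' (i a) (i b).
Proof. unfold symdiff. push. reflexivity. Qed.

Lemma codist_sd a b : codist o a b = codist o (symdiff o a b) (czero o).
Proof. unfold codist. rewrite (symdiff_zero _ _ HL). reflexivity. Qed.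

Lemma dN x y : d' x y = Nm (symdiff o' x y).
Proof.
set (S := fun x y (_ : L') => symdiff o' x y).
assert (hS : cont3 S) by (unfold S, symdiff; solve_cont).
apply Rminus_diag_uniq. destruct (Req_dec (d' x y - Nm (symdiff o' x y)) 0) as [hz|hne]; [exact hz|exfalso].
assert (hpos : 0 < Rabs (d' x y - Nm (symdiff o' x y))).
{ pose proof (Rabs_no_R0 _ hne). pose proof (Rabs_pos (d' x y - Nm (symdiff o' x y))). lra. }
set (eps := Rabs (d' x y - Nm (symdiff o' x y))) in *.
destruct (hS x y x (eps / 3)) as [dl [hdl hd]]; [lra|].
destruct (ddense x (Rmin dl (eps / 3))) as [a ha]; [apply Rmin_glb_lt; lra|].
destruct (ddense y (Rmin dl (eps / 3))) as [b hb]; [apply Rmin_glb_lt; lra|].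
assert (ha1 := Rlt_le_trans _ _ _ ha (Rmin_l _ _)). assert (ha2 := Rlt_le_trans _ _ _ ha (Rmin_r _ _)).
assert (hb1 := Rlt_le_trans _ _ _ hb (Rmin_l _ _)). assert (hb2 := Rlt_le_trans _ _ _ hb (Rmin_r _ _)).
pose proof (hd (i a) (i b) (i a) ha1 hb1 ha1) as hS1. unfold S in hS1.
assert (eq1 : d' (i a) (i b) = Nm (symdiff o' (i a) (i b))).
{ rewrite diso, codist_sd, <- N_i, i_symdiff. reflexivity. }
assert (t1 : Rabs (d' x y - d' (i a) (i b)) <= d' x (i a) + d' y (i b)).
{ apply Rabs_le. pose proof (dtri x (i a) y). pose proof (dtri (i a) (i b) y).
  pose proof (dtri (i a) x (i b)). pose proof (dtri x y (i b)).
  pose proof (dsym (i a) x). pose proof (dsym y (i b)). lra. }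
assert (t2 : Rabs (Nm (symdiff o' (i a) (i b)) - Nm (symdiff o' x y)) <= d' (symdiff o' x y) (symdiff o' (i a) (i b))).
{ apply Rabs_le. unfold Nm. pose proof (dtri (symdiff o' x y) (symdiff o' (i a) (i b)) (czero o')).
  pose proof (dtri (symdiff o' (i a) (i b)) (symdiff o' x y) (czero o')).
  rewrite (dsym (symdiff o' (i a) (i b)) (symdiff o' x y)) in *. lra. }
rewrite eq1 in t1.
assert (eps <= Rabs (d' x y - Nm (symdiff o' (i a) (i b))) + Rabs (Nm (symdiff o' (i a) (i b)) - Nm (symdiff o' x y))).
{ unfold eps. replace (d' x y - Nm (symdiff o' x y)) with ((d' x y - Nm (symdiff o' (i a) (i b))) + (Nm (symdiff o' (i a) (i b)) - Nm (symdiff o' x y))) by ring.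
  apply Rabs_triang. }
lra.
Qed.

Lemma Ndisc w n : codim_is o' w n -> Nm w = / 2 ^ n.
Proof.
intros [hn hn1]. apply Rle_antisym; [apply Kchar; exact hn|].
apply Rnot_lt_le. intros hlt.
destruct (ddense w (Rmin (/ 2 ^ n - Nm w) (/ 2 ^ (S (S n))))) as [a ha].
{ apply Rmin_glb_lt; [lra|apply inv_pow2_pos]. }
assert (hs : codimGe o' (symdiff o' w (i a)) (S (S n))).
{ apply Kchar. rewrite <- dN. left. eapply Rlt_le_trans; [exact ha|apply Rmin_r]. }
assert (c1 : codimGe o' (i a) n).
{ apply (codimGe_down _ o') with (cjoin o' w (csub o' (i a) w)); [apply (le_join_sub _ _ Hco')|].
  apply (codimGe_join _ o'); auto. apply (codimGe_down _ o') with (symdiff o' w (i a)); [apply (join_r _ _ Hco')|].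
  apply (codimGe_le _ o') with (S (S n)); [lia|auto]. }
assert (c2 : ~ codimGe o' (i a) (S n)).
{ intros hc. apply hn1. apply (codimGe_down _ o') with (cjoin o' (i a) (csub o' w (i a))); [apply (le_join_sub _ _ Hco')|].
  apply (codimGe_join _ o'); auto. apply (codimGe_down _ o') with (symdiff o' w (i a)); [apply (join_l _ _ Hco')|].
  apply (codimGe_le _ o') with (S (S n)); [lia|auto]. }
rewrite Kchar, N_i in c2.
assert (ge : / 2 ^ n <= Nm (i a)).
{ rewrite N_i. destruct (codist_cases _ o a (czero o)) as [[e0 _]|[j [e0 _]]]; rewrite e0 in *.
  - exfalso. apply c2. left; apply inv_pow2_pos.
  - apply inv_pow2_le. destruct (Compare_dec.le_lt_dec j n) as [l|l]; auto.
    exfalso. apply c2. apply inv_pow2_le. lia. }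
pose proof (N_tri (i a) w) as t. rewrite dsym in t.
assert (d' w (i a) < / 2 ^ n - Nm w) by (eapply Rlt_le_trans; [exact ha|apply Rmin_l]).
lra.
Qed.

Lemma main_sec : is_coHeyting o' /\ hausdorff o' /\
  (forall x y, d' x y = codist o' x y) /\
  (forall d : nat, (1 <= d)%nat ->
     (forall a b, dIdeal o d (symdiff o a b) <-> dIdeal o' d (symdiff o' (i a) (i b))) /\
     (forall x, exists a, dIdeal o' d (symdiff o' (i a) x))).
Proof.
split; [exact Hco'|split; [|split]].
- intros w hw. assert (hp : 0 < Nm w).
  { destruct (dpos w (czero o')) as [h|h]; auto. exfalso. apply hw. apply dzero. auto. }
  destruct (small_pow _ hp) as [k hk]. apply (not_all_codim _ o' w k).
  rewrite Kchar. lra.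
- intros x y. rewrite dN. destruct (codist_cases _ o' x y) as [[-> hall]|[n [-> hn]]].
  + apply Rle_antisym; [|apply dpos]. apply Rnot_lt_le. intros hp.
    destruct (small_pow _ hp) as [k hk]. pose proof (proj1 (Kchar _ k) (hall k)). lra.
  + apply Ndisc; auto.
- intros d _. split.
  + intros a b. unfold dIdeal. rewrite <- (codist_le_iff _ o), <- diso, dN, Kchar. tauto.
  + intros x. destruct (ddense x (/ 2 ^ d)) as [a ha]; [apply inv_pow2_pos|]. exists a.
    unfold dIdeal. apply Kchar. rewrite <- dN, dsym. lra.
Qed.
End Compl.

Theorem theorem7p1 (L L' : Type) (o : coHOps L) (o' : coHOps L')
    (d' : L' -> L' -> R) (i : L -> L') :
  is_coHeyting o -> hausdorff o ->
  is_completion (codist o) d' i ->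
  extends_by_continuity o o' d' i ->
  is_coHeyting o' /\ hausdorff o' /\
  (forall x y, d' x y = codist o' x y) /\
  (forall d : nat, (1 <= d)%nat ->
     (forall a b, dIdeal o d (symdiff o a b) <-> dIdeal o' d (symdiff o' (i a) (i b))) /\
     (forall x, exists a, dIdeal o' d (symdiff o' (i a) x))).
Proof. intros HL _ Hc He. apply main_sec; auto. Qed.
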